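(* Let $1\le p<\infty$. For each $k\ge1$ define the sequence $b^{(k)}=(b^{(k)}_n)_{n\ge1}$ by $b^{(k)}_n=1/k$ if $n\le k$ and $b^{(k)}_n=0$ if $n>k$. Then $(b^{(k)})_{k\ge1}$ is a Schauder basis of $h_p$ (with norm $\|x\|_{h_p}=(\sum_{k\ge1}|k\Delta x_k|^p)^{1/p}$). Moreover, every $x\in h_p$ has a unique representation $$x=\sum_k\lambda_k b^{(k)},\qquad\text{where } \lambda_k=(Mx)_k=k(x_k-x_{k+1}) \text{ for all } k.$$
   Context: Sequences are complex sequences $x=(x_k)_{k\ge1}$, and $\Delta x_k=x_k-x_{k+1}$. For $1\le p<\infty$, $$h_p=\Big\{x:\ \sum_{k=1}^{\infty}(k|\Delta x_k|)^p<\infty,\ \lim_k x_k=0\Big\}.$$ For $p=1$ this is the Hahn space $h$. $M$ is the matrix with $(Mx)_k=k(x_k-x_{k+1})$. A Schauder basis $(b^{(k)})$ of a normed sequence space $\lambda$ is a sequence such that every $x\in\lambda$ has a unique scalar sequence $(\alpha_k)$ with $\|x-\sum_{k\le n}\alpha_kb^{(k)}\|\to0$ as $n\to\infty$. *)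

(* Defs.v *)
From Stdlib Require Import Reals.
From Coquelicot Require Import Coquelicot.
Open Scope R_scope.

(* Sequences x = (x_1, x_2, ...) are represented 0-based:
   the Rocq term (x : nat -> C) has  x n  = x_{n+1}. *)
Definition cseq := nat -> C.

(* Real power with the convention 0^a = 0 (Rpower is only meaningful for x>0). *)
Definition rpow (x a : R) : R :=
  if Req_EM_T x 0 then 0 else Rpower x a.

Definition Delta (x : cseq) : cseq := fun n => Cminus (x n) (x (S n)).

Definition Mop (x : cseq) : cseq := fun n => Cmult (RtoC (INR (S n))) (Delta x n).

Definition hp_term (p : R) (x : cseq) : nat -> R :=
  fun n => rpow (INR (S n) * Cmod (Delta x n)) p.

Definition in_hp (p : R) (x : cseq) : Prop :=
  ex_series (hp_term p x) /\ is_lim_seq (fun n => Cmod (x n)) 0.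

Definition hp_norm (p : R) (x : cseq) : R :=
  rpow (Series (hp_term p x)) (/ p).

Definition bvec (k : nat) : cseq :=
  fun n => if Nat.leb n k then RtoC (/ INR (S k)) else RtoC 0.

Definition partial_comb (alpha : cseq) (bs : nat -> cseq) (N : nat) : cseq :=
  fun n => sum_n (fun k => Cmult (alpha k) (bs k n)) N.

Definition csub (x y : cseq) : cseq := fun n => Cminus (x n) (y n).

Definition hp_represents (p : R) (bs : nat -> cseq) (alpha : cseq) (x : cseq) : Prop :=
  is_lim_seq (fun N => hp_norm p (csub x (partial_comb alpha bs N))) 0.

Definition is_schauder_basis_hp (p : R) (bs : nat -> cseq) : Prop :=
  (forall k, in_hp p (bs k)) /\
  (forall x, in_hp p x -> exists! alpha : cseq, hp_represents p bs alpha x).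

(* Main.v *)
Require Import Defs.
From Stdlib Require Import Reals Lra Lia FunctionalExtensionality Classical.
From Coquelicot Require Import Coquelicot.
Open Scope R_scope.

Lemma Delta_bvec k n :
  Cmult (RtoC (INR (S n))) (Defs.Delta (bvec k) n) = if Nat.eqb n k then RtoC 1 else RtoC 0.
Proof.
  unfold Defs.Delta, bvec. rewrite !S_INR. pose proof (pos_INR n). pose proof (pos_INR k).
  destruct (Nat.eqb_spec n k) as [->|Hne].
  - rewrite Nat.leb_refl. replace (Nat.leb (S k) k) with false by (symmetry; apply Nat.leb_gt; lia).
    unfold Cmult, Cminus, Cplus, Copp, RtoC; simpl.
    apply injective_projections; simpl; field; lra.
  - destruct (Nat.leb_spec n k); destruct (Nat.leb_spec (S n) k); try lia;
    unfold Cmult, Cminus, Cplus, Copp, RtoC; simpl;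
    apply injective_projections; simpl; ring.
Qed.

Lemma alg1 (w a u v : C) :
  Cmult w (Cminus (Cmult a u) (Cmult a v)) = Cmult a (Cmult w (Cminus u v)).
Proof. destruct w, a, u, v; unfold Cmult, Cminus, Cplus, Copp; simpl;
  apply injective_projections; simpl; ring. Qed.

Lemma alg2 (w a u v s1 s2 : C) :
  Cmult w (Cminus (Cplus s1 (Cmult a u)) (Cplus s2 (Cmult a v))) =
  Cplus (Cmult w (Cminus s1 s2)) (Cmult a (Cmult w (Cminus u v))).
Proof. destruct w, a, u, v, s1, s2; unfold Cmult, Cminus, Cplus, Copp; simpl;
  apply injective_projections; simpl; ring. Qed.

Lemma Cmult_1r (a : C) : Cmult a (RtoC 1) = a.
Proof. destruct a; unfold Cmult, RtoC; simpl; apply injective_projections; simpl; ring. Qed.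
Lemma Cmult_0r (a : C) : Cmult a (RtoC 0) = RtoC 0.
Proof. destruct a; unfold Cmult, RtoC; simpl; apply injective_projections; simpl; ring. Qed.
Lemma Cplus_0r (a : C) : Cplus a (RtoC 0) = a.
Proof. destruct a; unfold Cplus, RtoC; simpl; apply injective_projections; simpl; ring. Qed.
Lemma Cplus_0l (a : C) : Cplus (RtoC 0) a = a.
Proof. destruct a; unfold Cplus, RtoC; simpl; apply injective_projections; simpl; ring. Qed.

Lemma Delta_partial alpha N n :
  Cmult (RtoC (INR (S n))) (Defs.Delta (partial_comb alpha bvec N) n) =
  if Nat.leb n N then alpha n else RtoC 0.
Proof.
  induction N as [|N IH].
  - unfold Defs.Delta, partial_comb. rewrite !sum_O.
    rewrite alg1. pose proof (Delta_bvec 0 n) as H. unfold Defs.Delta in H. rewrite H.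
    destruct n; simpl. apply Cmult_1r. apply Cmult_0r.
  - unfold Defs.Delta, partial_comb in *. rewrite !sum_Sn.
    change plus with Cplus. rewrite alg2, IH.
    pose proof (Delta_bvec (S N) n) as H. unfold Defs.Delta in H. rewrite H.
    destruct (Nat.leb_spec n (S N)); destruct (Nat.leb_spec n N);
      destruct (Nat.eqb_spec n (S N)); try lia; subst.
    all: rewrite ?Cmult_1r, ?Cmult_0r, ?Cplus_0l, ?Cplus_0r; reflexivity.
Qed.

Lemma alg3 (w x0 x1 p0 p1 : C) :
  Cmult w (Cminus (Cminus x0 p0) (Cminus x1 p1)) =
  Cminus (Cmult w (Cminus x0 x1)) (Cmult w (Cminus p0 p1)).
Proof. destruct w, x0, x1, p0, p1; unfold Cmult, Cminus, Cplus, Copp; simpl;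
  apply injective_projections; simpl; ring. Qed.

Lemma Cminus_0r (a : C) : Cminus a (RtoC 0) = a.
Proof. destruct a; unfold Cminus, Cplus, Copp, RtoC; simpl; apply injective_projections; simpl; ring. Qed.
Lemma Cminus_diag (a : C) : Cminus a a = RtoC 0.
Proof. destruct a; unfold Cminus, Cplus, Copp, RtoC; simpl; apply injective_projections; simpl; ring. Qed.
Lemma Cminus_eq (a b : C) : Cminus a b = RtoC 0 -> a = b.
Proof. destruct a, b; unfold Cminus, Cplus, Copp, RtoC; simpl; intros H; injection H; intros;
  apply injective_projections; simpl; lra. Qed.

Lemma wmod n (D : C) : INR (S n) * Cmod D = Cmod (Cmult (RtoC (INR (S n))) D).
Proof. rewrite Cmod_mult, Cmod_R, Rabs_pos_eq; [reflexivity| apply pos_INR]. Qed.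

Lemma hp_term_x p x n : hp_term p x n = rpow (Cmod (Mop x n)) p.
Proof. unfold hp_term, Mop. rewrite wmod. reflexivity. Qed.

Lemma hp_term_diff p x alpha N n :
  hp_term p (csub x (partial_comb alpha bvec N)) n =
  rpow (Cmod (Cminus (Mop x n) (if Nat.leb n N then alpha n else RtoC 0))) p.
Proof.
  unfold hp_term. rewrite wmod. rewrite <- Delta_partial. unfold Mop.
  unfold Defs.Delta, csub. rewrite alg3. reflexivity.
Qed.

Lemma rpow_nonneg x a : 0 <= rpow x a.
Proof. unfold rpow; destruct Req_EM_T. lra. unfold Rpower. left; apply exp_pos. Qed.

Lemma rpow_0 a : rpow 0 a = 0.
Proof. unfold rpow; destruct Req_EM_T; [reflexivity | lra]. Qed.

Lemma rpow_pos x a : 0 < x -> 0 < rpow x a.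
Proof. intros; unfold rpow; destruct Req_EM_T. lra. unfold Rpower. apply exp_pos. Qed.

Lemma Series_nonneg (a : nat -> R) : (forall n, 0 <= a n) -> ex_series a -> 0 <= Series a.
Proof.
  intros H He. replace 0 with (Series (fun n => 0 * a n)).
  apply Series_le; auto. intros n; rewrite Rmult_0_l; split; [lra|auto].
  rewrite Series_scal_l; ring.
Qed.

Lemma sum_zero (a : nat -> R) N : (forall k, (k <= N)%nat -> a k = 0) -> sum_f_R0 a N = 0.
Proof.
  induction N; simpl; intros H. apply H; lia. rewrite IHN, H; [ring|lia|]. intros; apply H; lia.
Qed.

Lemma sum_ge (a : nat -> R) N j : (forall n, 0 <= a n) -> (j <= N)%nat -> a j <= sum_f_R0 a N.
Proof.
  intros H. induction N; simpl; intros Hj.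
  - replace j with 0%nat by lia; lra.
  - destruct (Nat.eq_dec j (S N)). subst.
    assert (0 <= sum_f_R0 a N) by (apply cond_pos_sum; auto). lra.
    specialize (IHN ltac:(lia)). specialize (H (S N)). lra.
Qed.

Section Main.
Variables (p : R) (hp : 0 < p) (x : cseq) (Hx : in_hp p x) (alpha : cseq).

Let G N := hp_term p (csub x (partial_comb alpha bvec N)).

Lemma G_tail N n : (N < n)%nat -> G N n = hp_term p x n.
Proof.
  intros H. unfold G. rewrite hp_term_diff, hp_term_x.
  replace (Nat.leb n N) with false by (symmetry; apply Nat.leb_gt; lia).
  rewrite Cminus_0r. reflexivity.
Qed.

Lemma G_ex N : ex_series (G N).
Proof.
  apply (ex_series_incr_n _ (S N)).
  apply (ex_series_ext (fun k => hp_term p x (S N + k))).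
  intros; symmetry; apply G_tail; lia.
  apply (ex_series_incr_n (hp_term p x) (S N)). apply Hx.
Qed.

Lemma G_series N :
  Series (G N) = sum_f_R0 (G N) N + Series (fun k => hp_term p x (S N + k)).
Proof.
  rewrite (Series_incr_n (G N) (S N)); [| lia | apply G_ex]. simpl.
  f_equal. apply Series_ext. intros; apply G_tail; lia.
Qed.

Lemma G_nonneg N n : 0 <= G N n.
Proof. unfold G, hp_term. apply rpow_nonneg. Qed.

End Main.

Lemma rpow_lim (p : R) (hp : 0 < p) (u : nat -> R) :
  (forall n, 0 <= u n) -> is_lim_seq u 0 -> is_lim_seq (fun n => rpow (u n) (/ p)) 0.
Proof.
  intros Hn H. apply is_lim_seq_spec. apply is_lim_seq_spec in H.
  intros eps. destruct (H (mkposreal (Rpower eps p) (exp_pos _))) as [M HM].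
  exists M; intros n Hm. specialize (HM n Hm). simpl in HM.
  rewrite Rminus_0_r, Rabs_pos_eq in HM by apply Hn.
  rewrite Rminus_0_r, Rabs_pos_eq by apply rpow_nonneg.
  pose proof (cond_pos eps).
  unfold rpow; destruct Req_EM_T. lra.
  replace (pos eps) with (Rpower (Rpower eps p) (/ p)).
  apply Rlt_Rpower_l. apply Rinv_0_lt_compat; lra. specialize (Hn n). lra.
  rewrite Rpower_mult, Rinv_r, Rpower_1; lra.
Qed.

Lemma existence (p : R) (hp : 0 < p) (x : cseq) (Hx : in_hp p x) :
  hp_represents p bvec (Mop x) x.
Proof.
  unfold hp_represents, hp_norm.
  apply rpow_lim; auto.
  - intros N. apply Series_nonneg. apply G_nonneg. apply G_ex; auto.
  - apply (is_lim_seq_ext (fun N => Series (hp_term p x) - sum_f_R0 (hp_term p x) N)).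
    + intros N. rewrite G_series by auto.
      rewrite (sum_zero (hp_term p (csub x (partial_comb (Mop x) bvec N))) N). rewrite (Series_incr_n (hp_term p x) (S N)); [|lia|apply Hx]. cbn [Nat.pred]; ring.
      intros k Hk. rewrite hp_term_diff.
      replace (Nat.leb k N) with true by (symmetry; apply Nat.leb_le; lia).
      rewrite Cminus_diag, Cmod_0. apply rpow_0.
    + replace (Finite 0) with (Finite (Series (hp_term p x) - Series (hp_term p x)))
        by (f_equal; ring).
      apply is_lim_seq_minus'. apply is_lim_seq_const.
      apply (is_lim_seq_ext (sum_n (hp_term p x))). intros; apply sum_n_Reals.
      apply (Series_correct _ (proj1 Hx)).
Qed.

Lemma uniqueness (p : R) (hp : 0 < p) (x : cseq) (Hx : in_hp p x) alpha :
  hp_represents p bvec alpha x -> forall k, alpha k = Mop x k.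
Proof.
  intros H j. destruct (Classical_Prop.classic (alpha j = Mop x j)) as [E|E]; auto.
  exfalso.
  set (c := rpow (Cmod (Cminus (Mop x j) (alpha j))) p).
  assert (Hc : 0 < c).
  { apply rpow_pos. apply Cmod_gt_0. intros Z. apply E; symmetry; apply Cminus_eq; exact Z. }
  set (e := Rpower c (/ p)).
  assert (He : 0 < e) by apply exp_pos.
  unfold hp_represents in H. apply is_lim_seq_spec in H.
  destruct (H (mkposreal e He)) as [M HM].
  specialize (HM (Nat.max M j) ltac:(lia)). simpl in HM.
  rewrite Rminus_0_r, Rabs_pos_eq in HM by apply rpow_nonneg.
  set (N := Nat.max M j) in *.
  assert (Hs : c <= Series (hp_term p (csub x (partial_comb alpha bvec N)))).
  { rewrite G_series by auto.
    assert (0 <= Series (fun k => hp_term p x (S N + k))).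
    { apply Series_nonneg. intros; apply rpow_nonneg. apply (ex_series_incr_n (hp_term p x) (S N)), Hx. }
    assert (c <= sum_f_R0 (hp_term p (csub x (partial_comb alpha bvec N))) N).
    { replace c with (hp_term p (csub x (partial_comb alpha bvec N)) j).
      apply sum_ge. apply G_nonneg. lia.
      rewrite hp_term_diff. replace (Nat.leb j N) with true by (symmetry; apply Nat.leb_le; lia).
      reflexivity. }
    lra. }
  unfold hp_norm, rpow at 1 in HM. destruct Req_EM_T. lra.
  assert (e <= Rpower (Series (hp_term p (csub x (partial_comb alpha bvec N)))) (/ p)).
  { apply Rle_Rpower_l. left; apply Rinv_0_lt_compat; lra. lra. }
  lra.
Qed.

Lemma Rpower_1_base a : Rpower 1 a = 1.
Proof. unfold Rpower. rewrite ln_1, Rmult_0_r, exp_0. reflexivity. Qed.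

Lemma sum_n_zero N : sum_n (fun _ : nat => 0) N = 0.
Proof. induction N. apply sum_O. rewrite sum_Sn, IHN. apply Rplus_0_r. Qed.

Lemma bvec_hp (p : R) (hp : 0 < p) k : in_hp p (bvec k).
Proof.
  split.
  - apply (ex_series_incr_n _ (S k)).
    apply (ex_series_ext (fun _ => 0)).
    + intros n. unfold hp_term. rewrite wmod, Delta_bvec.
      replace (Nat.eqb (S k + n) k) with false by (symmetry; apply Nat.eqb_neq; lia).
      rewrite Cmod_0, rpow_0. reflexivity.
    + exists 0. cut (is_lim_seq (sum_n (fun _ : nat => 0)) 0). intro HH; exact HH. apply (is_lim_seq_ext (fun _ => 0)). intros; symmetry; apply sum_n_zero.
      apply is_lim_seq_const.
  - apply is_lim_seq_spec. intros eps. exists (S k). intros n Hn.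
    unfold bvec. replace (Nat.leb n k) with false by (symmetry; apply Nat.leb_gt; lia).
    rewrite Cmod_0, Rminus_0_r, Rabs_R0. apply cond_pos.
Qed.

Theorem theorem2p5 (p : R) (hp : 1 <= p) :
  is_schauder_basis_hp p bvec /\
  (forall x : cseq, in_hp p x ->
     forall alpha : cseq,
       hp_represents p bvec alpha x <-> (forall k, alpha k = Mop x k)).
Proof.
  assert (hp0 : 0 < p) by lra.
  assert (Hiff : forall x : cseq, in_hp p x ->
     forall alpha : cseq,
       hp_represents p bvec alpha x <-> (forall k, alpha k = Mop x k)).
  { intros x Hx alpha; split.
    - apply uniqueness; auto.
    - intros Ha. replace alpha with (Mop x). apply existence; auto.
      apply functional_extensionality; intros; symmetry; auto. }
  split; [split|]; auto.
  - intros k; apply bvec_hp; auto.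
  - intros x Hx. exists (Mop x). split. apply existence; auto.
    intros a Ha. apply functional_extensionality; intros k.
    symmetry; apply (Hiff x Hx a); auto.
Qed.
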